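(* Let $\mathcal{P}$ be a profile of unrooted phylogenetic trees whose display graph $G(\mathcal{P})$ is connected. Let $F$ be a nice minimal cut of $G(\mathcal{P})$ and let $G_1,G_2$ be the two connected components of $G(\mathcal{P})-F$. Then $\mathcal{L}(G_1)|\mathcal{L}(G_2)$ is a split of $\mathcal{L}(\mathcal{P})$, where $\mathcal{L}(G_i)$ denotes the set of leaves (elements of $\mathcal{L}(\mathcal{P})$) in $G_i$.
   Context: A phylogenetic tree $T$ is an unrooted tree whose leaves are bijectively labeled by $\mathcal{L}(T)$ (leaves identified with labels; internal vertices have degree at least three). A profile $\mathcal{P}=\{T_1,\dots,T_k\}$ is a finite collection of phylogenetic trees, $\mathcal{L}(\mathcal{P})=\bigcup_i\mathcal{L}(T_i)$; internal vertices of distinct trees are disjoint, while leaves with the same label are the same vertex. The display graph $G(\mathcal{P})$ has vertex set $\bigcup_i V(T_i)$ and edge set $\bigcup_i E(T_i)$. For a vertex $u$ of an input tree, $\mathrm{Inc}(u)$ is the set of edges of $G(\mathcal{P})$ incident with $u$. A split of a set $L$ is a bipartition of $L$ into two nonempty sets. A cut of a connected graph $G$ is $F\subseteq E(G)$ with $G-F$ disconnected; minimal if no proper subset is a cut (then $G-F$ has exactly two components). A cut $F$ of $G(\mathcal{P})$ is legal if for every $T\in\mathcal{P}$ there is $u\in V(T)$ with $F\cap E(T)\subseteq\mathrm{Inc}(u)$; nice if legal and every component of $G(\mathcal{P})-F$ contains at least one edge. *)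

(* Defs.v *)
(* Graphs on a finite vertex type V; an edge is a 2-element
   subset of V, an edge set is a {set {set V}}. *)
From mathcomp Require Import all_boot.
Set Implicit Arguments. Unset Strict Implicit. Unset Printing Implicit Defensive.

Section Graphs.
Variable V : finType.

Definition adj (E : {set {set V}}) : rel V :=
  fun x y => (x != y) && ([set x; y] \in E).

Definition grel (W : {set V}) (E : {set {set V}}) : rel V :=
  fun x y => [&& x \in W, y \in W & adj E x y].

Definition is_graph (W : {set V}) (E : {set {set V}}) : Prop :=
  forall e, e \in E -> exists x y, [/\ x \in W, y \in W, x != y & e = [set x; y]].

Definition connected (W : {set V}) (E : {set {set V}}) : Prop :=
  W != set0 /\ forall x y, x \in W -> y \in W -> connect (grel W E) x y.

Definition acyclic (W : {set V}) (E : {set {set V}}) : Prop :=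
  forall s : seq V, uniq s -> 2 < size s -> all (mem W) s -> ~~ cycle (grel W E) s.

Definition is_tree (W : {set V}) (E : {set {set V}}) : Prop :=
  [/\ is_graph W E, connected W E & acyclic W E].

Definition deg (E : {set {set V}}) (v : V) : nat := #|[set e in E | v \in e]|.

Definition leaves (W : {set V}) (E : {set {set V}}) : {set V} :=
  [set v in W | deg E v <= 1].

Definition phylo_tree (W : {set V}) (E : {set {set V}}) : Prop :=
  is_tree W E /\ forall v, v \in W -> v \notin leaves W E -> 2 < deg E v.

(* A profile of k phylogenetic trees T_i = (VT i, ET i); internal vertices of
   distinct trees are disjoint, and shared vertices are leaves (labels) of both. *)
Definition profile (k : nat) (VT : 'I_k -> {set V}) (ET : 'I_k -> {set {set V}}) : Prop :=
  (forall i, phylo_tree (VT i) (ET i)) /\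
  (forall i j v, i != j -> v \in VT i -> v \in VT j ->
      (v \in leaves (VT i) (ET i)) && (v \in leaves (VT j) (ET j))).

Definition profile_leaves k (VT : 'I_k -> {set V}) ET : {set V} :=
  \bigcup_(i < k) leaves (VT i) (ET i).

Definition dV k (VT : 'I_k -> {set V}) : {set V} := \bigcup_(i < k) VT i.
Definition dE k (ET : 'I_k -> {set {set V}}) : {set {set V}} := \bigcup_(i < k) ET i.

Definition is_cut (W : {set V}) (E F : {set {set V}}) : Prop :=
  F \subset E /\ ~ connected W (E :\: F).

Definition minimal_cut W E F : Prop :=
  is_cut W E F /\ forall F' : {set {set V}}, F' \proper F -> ~ is_cut W E F'.

Definition Inc k (ET : 'I_k -> {set {set V}}) (u : V) : {set {set V}} :=
  [set e in dE ET | u \in e].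

Definition legal_cut k (VT : 'I_k -> {set V}) ET F : Prop :=
  is_cut (dV VT) (dE ET) F /\
  forall i, exists2 u, u \in VT i & F :&: ET i \subset Inc ET u.

Definition is_component (W : {set V}) (E : {set {set V}}) (C : {set V}) : Prop :=
  exists2 x, x \in W & C = [set y in W | connect (grel W E) x y].

Definition nice_cut k (VT : 'I_k -> {set V}) ET F : Prop :=
  legal_cut VT ET F /\
  forall C, is_component (dV VT) (dE ET :\: F) C ->
    exists2 e, e \in dE ET :\: F & e \subset C.

Definition is_split (L A B : {set V}) : Prop :=
  [/\ A != set0, B != set0, A :&: B = set0 & A :|: B = L].

End Graphs.

(* Main.v *)
Require Import Defs.
From mathcomp Require Import all_boot.
Set Implicit Arguments. Unset Strict Implicit. Unset Printing Implicit Defensive.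
Section Leaf.
Variable T : finType.
Variable r : rel T.
Hypothesis rsym : symmetric r.
Hypothesis rirr : irreflexive r.
Hypothesis racyc : forall s, uniq s -> 2 < size s -> ~~ cycle r s.

Definition goodl x (l : seq T) := [&& uniq l, sorted r l & connect r x (head x l)].

Lemma end_nbr x l : goodl x l -> 0 < size l ->
  (forall l', goodl x l' -> size l' <= size l) ->
  forall z, r (last x l) z -> exists p, l = rcons (rcons p z) (last x l).
Proof.
case: l => [|a s] // /and3P[Hu Hs Hc] _ Hmax z Hz.
have zin : z \in a :: s.
  apply/negPn/negP => zn.
  have : goodl x (rcons (a :: s) z).
    rewrite /goodl rcons_uniq zn Hu /= Hc andbT.
    have Hs' : path r a s := Hs.
    by rewrite rcons_path Hs' Hz.
  by move/Hmax; rewrite size_rcons ltnn.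
case/splitPr: zin Hu Hs Hz => p1 p2 Hu Hs Hz.
move: Hs; rewrite sorted_cat_cons => /andP[_ Hp2].
have Hu2 : uniq (z :: p2) by move: Hu; rewrite cat_uniq => /and3P[_ _ ->].
have Hl : last x (p1 ++ z :: p2) = last z p2 by rewrite last_cat.
rewrite Hl in Hz *.
have Hcy : cycle r (z :: p2) by rewrite /= rcons_path Hp2 Hz.
have Hsz : size (z :: p2) <= 2.
  by rewrite leqNgt; apply/negP => H; move: (racyc Hu2 H); rewrite Hcy.
case: p2 => [|w [|w' p3]] in Hu Hp2 Hu2 Hz Hcy Hsz Hl * => //=.
  by rewrite rirr in Hz.
exists p1. by rewrite -!cats1 -catA.
Qed.

Lemma goodl_rev x l : goodl x l -> goodl x (rev l).
Proof.
case: l => [|a s] // /and3P[Hu Hs Hc].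
rewrite /goodl rev_uniq Hu rev_sorted.
have -> : sorted (fun z => r^~ z) (a::s) by apply: sub_sorted Hs => u v; rewrite rsym.
rewrite /=.
have -> : head x (rev (a :: s)) = last a s by rewrite lastI rev_rcons.
apply: connect_trans Hc _.
by apply: (path_connect Hs); apply: mem_last.
Qed.

Lemma uniq_nbr x l : goodl x l -> 0 < size l ->
  (forall l', goodl x l' -> size l' <= size l) ->
  forall z1 z2, r (last x l) z1 -> r (last x l) z2 -> z1 = z2.
Proof.
move=> G S M z1 z2 H1 H2.
have [p1 E1] := end_nbr G S M H1.
have [p2 E2] := end_nbr G S M H2.
rewrite E1 in E2. case/rcons_inj: E2 => /rcons_inj. by case.
Qed.

Lemma tree_leaf x y bad : r x y ->
  exists b, [/\ connect r x b, b != bad & forall z1 z2, r b z1 -> r b z2 -> z1 = z2].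
Proof.
move=> Hxy.
pose P := fun n => [exists t : n.-tuple T, goodl x t].
have P2 : P 2.
  apply/existsP; exists [tuple x; y].
  rewrite /goodl /= mem_seq1 Hxy connect0 !andbT.
  by apply/eqP => E; move: Hxy; rewrite E rirr.
have ub : forall n, P n -> n <= #|T|.
  move=> n /existsP[t /and3P[Hu _ _]].
  by rewrite -(size_tuple t) -(card_uniqP Hu) max_card.
case: (ex_maxnP (ex_intro _ 2 P2) ub) => m /existsP[t Gt] Mm.
have Hm : 2 <= m by apply: Mm.
have M : forall l', goodl x l' -> size l' <= size t.
  move=> l' G'; rewrite size_tuple; apply: Mm.
  by apply/existsP; exists (in_tuple l').
have St : 1 < size t by rewrite size_tuple.
move: Gt M St; case: (val t) => [|a [|w s]] //= Gt M _.
have Gr := goodl_rev Gt.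
have Mr : forall l', goodl x l' -> size l' <= size (rev [:: a, w & s]).
  by move=> l' /M; rewrite size_rev.
have U1 := uniq_nbr Gt isT M.
have U2 := uniq_nbr Gr (ltac:(by rewrite size_rev)) Mr.
rewrite rev_cons last_rcons in U2.
have Hc : connect r x a by case/and3P: Gt.
have Hpath : path r a (w :: s) by case/and3P: Gt.
have Hcb : connect r x (last a (w :: s)).
  by apply: connect_trans Hc _; apply: (path_connect Hpath); apply: mem_last.
have Hab : a != last a (w :: s).
  case/and3P: Gt => /andP[Ha _] _ _; apply/eqP => E.
  by move: Ha; rewrite {1}E /= mem_last.
case: (eqVneq (last a (w :: s)) bad) => Eb.
  exists a; split => //; by rewrite -Eb.
by exists (last a (w :: s)); split.
Qed.

End Leaf.

Section G.
Variable V : finType.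
Implicit Types (W : {set V}) (E : {set {set V}}).

Lemma grel_sym W E : symmetric (Defs.grel W E).
Proof.
move=> x y; rewrite /Defs.grel /adj eq_sym.
have -> : [set y; x] = [set x; y] by rewrite setUC.
by rewrite andbCA; congr andb; rewrite andbCA.
Qed.

Lemma grel_irr W E : irreflexive (Defs.grel W E).
Proof. by move=> x; rewrite /Defs.grel /adj eqxx /= !andbF. Qed.

Lemma path_all W E x p : path (Defs.grel W E) x p -> all (mem W) p.
Proof.
elim: p x => [|y p IH] x //= /andP[/and3P[_ Hy _] Hp].
by rewrite Hy (IH y Hp).
Qed.

Lemma conn_in W E x b : x \in W -> connect (Defs.grel W E) x b -> b \in W.
Proof.
move=> Hx /connectP[p Hp ->].
have := path_all Hp.
have : last x p \in x :: p by apply: mem_last.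
rewrite in_cons => /orP[/eqP -> //|Hl] /allP; exact.
Qed.

Lemma cycle_all W E s : cycle (Defs.grel W E) s -> all (mem W) s.
Proof.
case: s => [|z s] //= /path_all; by rewrite all_rcons.
Qed.

End G.

Theorem lemma10 (V : finType) (k : nat) (VT : 'I_k -> {set V})
    (ET : 'I_k -> {set {set V}}) (F : {set {set V}}) (C1 C2 : {set V}) :
  profile VT ET ->
  connected (dV VT) (dE ET) ->
  nice_cut VT ET F ->
  minimal_cut (dV VT) (dE ET) F ->
  is_component (dV VT) (dE ET :\: F) C1 ->
  is_component (dV VT) (dE ET :\: F) C2 ->
  C1 != C2 ->
  is_split (profile_leaves VT ET) (profile_leaves VT ET :&: C1)
           (profile_leaves VT ET :&: C2).
Proof.
move=> [Hphy Hprof] Hconn [[Hcut Hleg] Hnice] [[HFsub Hncon] Hmin] [x1 Hx1 ->] [x2 Hx2 ->] Hne.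
set W := dV VT. set E := dE ET. set L := profile_leaves VT ET.
set R := Defs.grel W (E :\: F).
have Rs : connect_sym R by apply: sym_connect_sym; apply: grel_sym.
pose cls p := [set y in W | connect R p y].
have cls_eq : forall p q, connect R p q -> cls p = cls q.
  move=> p q Hpq; apply/setP => v; rewrite !inE; congr andb.
  apply/idP/idP => H; first by apply: connect_trans H; rewrite Rs.
  exact: connect_trans Hpq H.
have graphE : forall e, e \in E -> exists i, e \in ET i /\
    exists x y, [/\ x \in VT i, y \in VT i, x != y & e = [set x; y]].
  move=> e /bigcupP[i _ Hi]; exists i; split => //.
  by case: (Hphy i) => [[Hg _ _] _]; apply: Hg.
have VTW : forall i v, v \in VT i -> v \in W.
  by move=> i v Hv; apply/bigcupP; exists i.
have LW : forall v, v \in L -> v \in W.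
  by move=> v /bigcupP[i _]; rewrite inE => /andP[Hv _]; apply: VTW Hv.
have NE : forall x0, x0 \in W -> exists2 v, v \in L & v \in cls x0.
  move=> x0 Hx0.
  have [e He HeC] := Hnice (cls x0) (ex_intro2 _ _ x0 Hx0 erefl).
  have HeE : e \in E by move: He; rewrite inE => /andP[].
  have HeF : e \notin F by move: He; rewrite inE => /andP[].
  have [i [Hei [x [y [Hx Hy Hxy Exy]]]]] := graphE e HeE.
  have [u Hu HFu] := Hleg i.
  pose r := Defs.grel (VT i) (ET i :\: F).
  have Hphyi := Hphy i. case: Hphyi => [[_ _ Hacyc] Hint].
  have racyc : forall s, uniq s -> 2 < size s -> ~~ cycle r s.
    move=> s Hus Hs; apply/negP => Hc.
    have Hc' : cycle (Defs.grel (VT i) (ET i)) s.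
      apply: sub_cycle Hc => p q; rewrite /r /Defs.grel /adj.
      case/and3P => -> -> /andP[-> /=].
      by rewrite inE => /andP[_ ->].
    by move: (Hacyc s Hus Hs (cycle_all Hc')); rewrite Hc'.
  have rxy : r x y.
    by rewrite /r /Defs.grel Hx Hy /adj Hxy -Exy inE HeF Hei.
  have [b [Hxb Hbu Hbn]] := tree_leaf (@grel_sym _ _ _) (@grel_irr _ _ _) racyc u rxy.
  have HbV : b \in VT i by apply: conn_in Hx Hxb.
  exists b.
    apply/bigcupP; exists i => //; rewrite inE HbV /=.
    rewrite leqNgt; apply/negP => Hdeg.
    have Hd2 : deg (ET i) b <= 2.
      pose z0 := odflt b [pick z | r b z].
      apply: leq_trans (_ : #|[set [set b; u]; [set b; z0]]| <= 2); last first.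
        by rewrite cards2; case: (_ != _).
      apply: subset_leq_card; apply/subsetP => e'; rewrite inE => /andP[He' Hbe'].
      have [pq Hp Hpq] : exists2 w, w \in VT i & (w != b) && (e' == [set b; w]).
        case: (Hphy i) => [[Hg _ _] _].
        have [p [q [Hp Hq Hpq Ee]]] := Hg e' He'; rewrite Ee.
        move: Hbe'; rewrite Ee !inE => /orP[/eqP->|/eqP->].
          by exists q => //; rewrite eq_sym Hpq eqxx.
        by exists p => //; rewrite Hpq setUC eqxx.
      move: Hpq => /andP[Hpq /eqP E'].
      case: (boolP (e' \in F)) => HF.
        have : e' \in Inc ET u by apply: (subsetP HFu); rewrite inE HF He'.
        rewrite inE E' !inE => /andP[_ /orP[/eqP Eu|/eqP Eu]].
          by rewrite Eu eqxx in Hbu.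
        by rewrite Eu eqxx.
      have rbw : r b pq.
        rewrite /r /Defs.grel HbV Hp /adj eq_sym Hpq -E' inE HF He'.
        done.
      rewrite /z0; case: pickP => [z' Hz'|H0]; last by rewrite H0 in rbw.
      by rewrite /= E' (Hbn _ _ rbw Hz') set22.
    by move: (Hint b HbV); rewrite inE HbV /= leqNgt Hdeg => /(_ isT); rewrite ltnNge Hd2.
  have Hx0x : connect R x0 x.
    have : x \in cls x0 by apply: (subsetP HeC); rewrite Exy set21.
    by rewrite inE => /andP[].
  rewrite inE (VTW _ _ HbV) /=.
  apply: connect_trans Hx0x _.
  apply: connect_sub Hxb => p q /and3P[Hp Hq /andP[Hpq He']].
  apply: connect1; rewrite /R /Defs.grel (VTW _ _ Hp) (VTW _ _ Hq) /adj Hpq /=.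
  move: He'; rewrite !inE => /andP[-> Hpe] /=.
  by apply/bigcupP; exists i.
have [f Hf] : exists f, f \in F.
  apply/set0Pn/negP => /eqP F0; apply: Hncon; by rewrite F0 setD0.
have [a [b [Ha Hb Hab Ef]]] : exists a b, [/\ a \in W, b \in W, a != b & f = [set a; b]].
  have [i [_ [a [b [Ha Hb Hab Ef]]]]] := graphE f (subsetP HFsub f Hf).
  by exists a, b; split => //; [apply: VTW Ha | apply: VTW Hb].
set R2 := Defs.grel W (E :\: (F :\ f)).
have Hcon2 : forall v, v \in W -> connect R2 a v.
  move=> v Hv; apply/negPn/negP => Hn.
  apply: (Hmin (F :\ f) (properD1 Hf)); split.
    by apply: subset_trans HFsub; apply: subsetDl.
  by case=> _ /(_ a v Ha Hv); rewrite (negbTE Hn).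
pose S := [pred y | connect R a y || connect R b y].
have Scl : forall u w, R2 u w -> S u -> S w.
  move=> u w /and3P[Hu Hw /andP[Huw Hin]] /=.
  case: (eqVneq [set u; w] f) => Euw.
    have : w \in f by rewrite -Euw set22.
    by rewrite Ef !inE => /orP[/eqP->|/eqP->]; rewrite connect0 ?orbT.
  have Ruw : R u w.
    rewrite /R /Defs.grel Hu Hw /adj Huw /=.
    move: Hin; rewrite inE in_setD1 Euw /= => /andP[H1 H2].
    by rewrite inE H1 H2.
  by case/orP => H; apply/orP; [left|right]; apply: connect_trans H (connect1 Ruw).
have Sc : closed R2 S.
  move=> u w H; apply/idP/idP; first exact: Scl.
  by apply: Scl; rewrite /R2 grel_sym.
have SW : forall v, v \in W -> S v.
  by move=> v Hv; have := closed_connect Sc (Hcon2 v Hv); rewrite !inE connect0 => <-.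
have clsS : forall v, v \in W -> cls v = cls a \/ cls v = cls b.
  move=> v /SW /orP[H|H]; [left|right]; by rewrite (cls_eq _ _ H).
have Hne' : cls x1 != cls x2 by [].
have cover : forall v, v \in W -> (v \in cls x1) || (v \in cls x2).
  move=> v Hv; have [cv|cv] := clsS v Hv;
    have [c1|c1] := clsS x1 Hx1; have [c2|c2] := clsS x2 Hx2;
    rewrite ?c1 ?c2 in Hne'; rewrite ?c1 ?c2 ?eqxx // in Hne' *;
    by rewrite -cv /cls !inE Hv connect0 ?orbT.
have [v1 Hv1L Hv1] := NE x1 Hx1.
have [v2 Hv2L Hv2] := NE x2 Hx2.
split.
- by apply/set0Pn; exists v1; rewrite inE Hv1L.
- by apply/set0Pn; exists v2; rewrite inE Hv2L.
- apply/setP => v; rewrite !inE; apply/negP => /andP[/andP[_ H1] /andP[_ H2]].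
  have E1 : cls x1 = cls v by apply: cls_eq; case/andP: H1.
  have E2 : cls x2 = cls v by apply: cls_eq; case/andP: H2.
  by move: Hne'; rewrite E1 E2 eqxx.
- apply/setP => v; rewrite !inE; case Hv: (v \in L) => //=.
  by have := cover v (LW v Hv); rewrite !inE.
Qed.
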